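(* Valuated flag gammoids are closed under translation: if $\boldsymbol\mu=(\mu_1,\dots,\mu_s)$ is a valuated flag gammoid on $[n]$ and $x\in\mathbb{R}^n$, then $\boldsymbol\mu+x=(\mu_1+x,\dots,\mu_s+x)$, where $(\mu_j+x)(B)=\mu_j(B)+\sum_{i\in B}x_i$, is a valuated flag gammoid.
   Context: A valuated flag gammoid is a tuple $(\mu_1,\dots,\mu_s)$ arising as follows: $\Gamma=(V,E)$ is a finite directed graph with $[n]\subseteq V$, $w:E\to\mathbb{R}$ edge weights with no negative-weight directed cycle, $S_1\subset\dots\subset S_s\subseteq V$ with $|S_j|=d_j$ such that some subset of $[n]$ has a linking onto each $S_j$, and $\mu_j(I)$, for $I\in\binom{[n]}{d_j}$, is the minimum total weight of a linking from $I$ onto $S_j$ ($\infty$ if none). A linking from $I$ onto $J$ is a family of $|I|=|J|$ pairwise vertex-disjoint directed paths (length 0 allowed) from the vertices of $I$ to the vertices of $J$. *)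

(* Defs.v *)
From HB Require Import structures.
From mathcomp Require Import all_boot all_order all_algebra.
From mathcomp Require Import reals constructive_ereal.
Set Implicit Arguments. Unset Strict Implicit. Unset Printing Implicit Defensive.
Import Order.TTheory GRing.Theory Num.Theory.
Local Open Scope ring_scope.

Section Gammoid.
Variables (R : realType) (V : finType) (n : nat).
Variables (E : rel V) (w : V -> V -> R) (emb : 'I_n -> V).

Definition is_dpath (p : seq V) : bool :=
  if p is x :: s then path E x s && uniq p else false.

Definition pweight (p : seq V) : R :=
  \sum_(e <- zip p (behead p)) w e.1 e.2.

Definition dstarts (L : seq (seq V)) : {set V} :=
  [set v | has (fun p => ohead p == Some v) L].
Definition dends (L : seq (seq V)) : {set V} :=
  [set v | has (fun p => ohead (rev p) == Some v) L].

Definition is_linking (I : {set 'I_n}) (J : {set V}) (L : seq (seq V)) : Prop :=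
  [/\ all is_dpath L, uniq (flatten L),
      dstarts L = emb @: I & dends L = J].

Definition lweight (L : seq (seq V)) : R := \sum_(p <- L) pweight p.

Definition min_linking_weight (I : {set 'I_n}) (J : {set V}) (m : \bar R) : Prop :=
  ((forall L, ~ is_linking I J L) /\ m = +oo%E) \/
  (exists L, [/\ is_linking I J L, m = (lweight L)%:E &
     forall L', is_linking I J L' -> (m <= (lweight L')%:E)%E]).

Definition no_neg_cycle : Prop :=
  forall (x : V) (s : seq V), uniq (x :: s) -> cycle E (x :: s) ->
    0 <= pweight (x :: rcons s x).

End Gammoid.

(* (mu_1, ..., mu_s) with mu_j defined on the d_j-subsets of [n]
   (values of mu j on sets of other sizes are irrelevant). *)
Definition valuated_flag_gammoid (R : realType) (n s : nat) (d : 'I_s -> nat)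
    (mu : 'I_s -> {set 'I_n} -> \bar R) : Prop :=
  exists (V : finType) (E : rel V) (w : V -> V -> R) (emb : 'I_n -> V)
         (S : 'I_s -> {set V}),
    [/\ injective emb /\ no_neg_cycle E w,
        (forall j k : 'I_s, (j < k)%N -> S j \proper S k),
        (forall j, #|S j| = d j),
        (forall j, exists I L, is_linking E emb I (S j) L) &
        (forall j (I : {set 'I_n}), #|I| = d j ->
          min_linking_weight E w emb I (S j) (mu j I))].

Definition translate_flag (R : realType) (n s : nat)
    (mu : 'I_s -> {set 'I_n} -> \bar R) (x : 'I_n -> R) :
    'I_s -> {set 'I_n} -> \bar R :=
  fun j B => (mu j B + (\sum_(i in B) x i)%:E)%E.

(* Main.v *)
Require Import Defs.
From HB Require Import structures.
From mathcomp Require Import all_boot all_order all_algebra.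
From mathcomp Require Import reals constructive_ereal.
Set Implicit Arguments. Unset Strict Implicit. Unset Printing Implicit Defensive.
Import Order.TTheory GRing.Theory Num.Theory.
Local Open Scope ring_scope.

Definition Ex (V : finType) (E : rel V) : rel (V + V) :=
  fun u v => match u, v with
  | inl a, inl b => E a b
  | inr a, inl b => b == a
  | _, _ => false end.

Definition xw (R : realType) (V : finType) n (emb : 'I_n -> V) (x : 'I_n -> R) (a : V) : R :=
  if [pick i | emb i == a] is Some i then x i else 0.

Definition wx (R : realType) (V : finType) (w : V -> V -> R) (f : V -> R) (u v : V + V) : R :=
  match u, v with
  | inl a, inl b => w a b
  | inr a, _ => f a
  | _, _ => 0 end.

Definition liftp (V : finType) (p : seq V) : seq (V + V) :=
  if p is a :: _ then inr a :: map inl p else [::].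
Definition getl (V : finType) (v : V + V) : option V :=
  if v is inl a then Some a else None.
Definition isl (V : finType) (v : V + V) : bool :=
  if v is inl a then true else false.
Definition xh (R : realType) (f : 'I_0 -> R) := f.

Lemma path_map_inl (V : finType) (E : rel V) a r :
  path (Ex E) (inl a) (map inl r) = path E a r.
Proof. by elim: r a => //= b r IH a; rewrite IH. Qed.

Lemma path_inl_all (V : finType) (E : rel V) a r :
  path (Ex E) (inl a) r -> all (@isl V) r.
Proof. by elim: r a => //= [[b|b]] r IH a //= /andP[_ /IH]. Qed.

Lemma all_isl_map (V : finType) (r : seq (V + V)) :
  all (@isl V) r -> r = map inl (pmap (@getl V) r).
Proof. by elim: r => //= [[b|b]] r IH //= /IH <-. Qed.

Lemma pweight_cons2 (R : realType) (V : finType) (w : V -> V -> R) a b s :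
  pweight w (a :: b :: s) = w a b + pweight w (b :: s).
Proof. by rewrite /pweight /= big_cons. Qed.

Lemma pweight_map_inl (R : realType) (V : finType) (w : V -> V -> R) f p :
  pweight (wx w f) (map inl p) = pweight w p.
Proof.
elim: p => [|a s IH]; first by rewrite /pweight !big_nil.
move: IH; case: s => [|b s] IH; first by rewrite /pweight !big_nil.
rewrite [map _ _]/= (pweight_cons2 (wx w f)) pweight_cons2 -IH.
by []. Qed.

Lemma pweight_lift (R : realType) (V : finType) (w : V -> V -> R) f a s :
  pweight (wx w f) (liftp (a :: s)) = f a + pweight w (a :: s).
Proof. by rewrite /liftp [map _ _]/= (pweight_cons2 (wx w f)) -[inl a :: _]/(map inl (a :: s)) pweight_map_inl. Qed.

Lemma dpath_lift (V : finType) (E : rel V) p :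
  is_dpath (Ex E) (liftp p) = is_dpath E p.
Proof.
case: p => [|a s] //.
rewrite /is_dpath /liftp -/(map inl (a :: s)).
rewrite /= eqxx path_map_inl /=.
have -> : inr a \notin inl a :: map inl s.
  by rewrite -/(map inl (a :: s)); apply/mapP => -[].
rewrite -/(map inl (a :: s)) (map_inj_uniq (@inl_inj V V)).
by rewrite (mem_map (@inl_inj V V)).
Qed.

Lemma ohead_rev (T : Type) (a : T) s : ohead (rev (a :: s)) = Some (last a s).
Proof. by rewrite lastI rev_rcons. Qed.

Lemma dstarts_lift (V : finType) (L : seq (seq V)) :
  dstarts (map (@liftp V) L) = inr @: dstarts L.
Proof.
apply/setP => -[b|b]; rewrite /dstarts !inE.
- transitivity false.
    by apply/negbTE/hasPn => p /mapP[[|a s] _ ->].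
  by apply/esym/negbTE/imsetP => -[c _].
- rewrite (mem_imset _ _ (@inr_inj V V)) inE has_map; apply: eq_has => -[|a s] //=.
Qed.

Lemma dends_lift (V : finType) (L : seq (seq V)) :
  dends (map (@liftp V) L) = inl @: dends L.
Proof.
apply/setP => -[b|b]; rewrite /dends !inE.
- rewrite (mem_imset _ _ (@inl_inj V V)) inE has_map; apply: eq_has => -[|a s] //=.
  by rewrite ohead_rev /= last_map ohead_rev.
- transitivity false.
    apply/negbTE/hasPn => p /mapP[[|a s] _ ->] //.
    by rewrite /liftp ohead_rev /= last_map.
  by apply/esym/negbTE/imsetP => -[c _].
Qed.

Lemma flatten_lift_perm (V : finType) (L : seq (seq V)) :
  perm_eq (flatten (map (@liftp V) L))
          (map inr (pmap ohead L) ++ map inl (flatten L)).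
Proof.
elim: L => [|[|a s] L IH] //=.
rewrite perm_cons map_cat -/(map inl (a :: s)).
rewrite -!cat_cons perm_sym (perm_catCA (map inr (pmap ohead L))) perm_sym perm_cat2l.
exact: IH.
Qed.

Lemma heads_subseq (V : finType) (L : seq (seq V)) :
  subseq (pmap ohead L) (flatten L).
Proof.
elim: L => [|[|a s] L IH] //=.
rewrite eqxx; apply: subseq_trans IH _; exact: suffix_subseq.
Qed.

Lemma uniq_lift (V : finType) (L : seq (seq V)) :
  uniq (flatten (map (@liftp V) L)) = uniq (flatten L).
Proof.
rewrite (perm_uniq (flatten_lift_perm L)) cat_uniq.
rewrite (map_inj_uniq (@inr_inj V V)) (map_inj_uniq (@inl_inj V V)).
have -> : has (mem (map inr (pmap ohead L))) (map inl (flatten L)) = false.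
  by apply/negbTE/hasPn => v /mapP[c _ ->]; apply/mapP => -[].
case U: (uniq (flatten L)); rewrite ?andbF //=.
by rewrite (subseq_uniq (heads_subseq L) U).
Qed.

Lemma linking_lift (V : finType) n (E : rel V) (emb : 'I_n -> V) (I : {set 'I_n}) (S : {set V}) L :
  is_linking (Ex E) (fun i => inr (emb i)) I (inl @: S) (map (@liftp V) L) <->
  is_linking E emb I S L.
Proof.
rewrite /is_linking.
have -> : all (is_dpath (Ex E)) (map (@liftp V) L) = all (is_dpath E) L.
  by rewrite all_map; apply: eq_all => p; exact: dpath_lift.
rewrite uniq_lift dstarts_lift dends_lift.
have -> : [set (@inr V V) (emb i) | i in I] = (@inr V V) @: (emb @: I) by rewrite -imset_comp.
split=> -[-> -> H1 H2]; split => //.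
- exact: (imset_inj (@inr_inj V V)).
- exact: (imset_inj (@inl_inj V V)).
- by rewrite H1.
- by rewrite H2.
Qed.

Lemma mem_heads (V : finType) (L : seq (seq V)) v :
  (v \in pmap ohead L) = has (fun p => ohead p == Some v) L.
Proof. by elim: L => [|[|a s] L IH] //=; rewrite in_cons IH eq_sym. Qed.

Lemma lweight_lift (R : realType) (V : finType) n (E : rel V) (w : V -> V -> R)
   (emb : 'I_n -> V) (x : 'I_n -> R) (I : {set 'I_n}) (S : {set V}) L :
  injective emb -> is_linking E emb I S L ->
  lweight (wx w (xw emb x)) (map (@liftp V) L) = lweight w L + \sum_(i in I) x i.
Proof.
move=> inj [_ U DS _].
rewrite /lweight big_map.
pose hx (p : seq V) := if p is a :: _ then xw emb x a else 0.
rewrite (eq_bigr (fun p => hx p + pweight w p)); last first.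
  move=> [|a s] _; first by rewrite /pweight !big_nil addr0.
  by rewrite pweight_lift.
rewrite big_split /= addrC; congr (_ + _).
have -> : \sum_(p <- L) hx p = \sum_(v <- pmap ohead L) xw emb x v.
  elim: L {U DS} => [|[|a s] L IH]; rewrite ?big_nil //=.
    by rewrite big_cons IH add0r.
  by rewrite !big_cons IH.
rewrite big_uniq; last exact: (subseq_uniq (heads_subseq L) U).
rewrite (eq_bigl (fun v => v \in emb @: I)); last first.
  by move=> v; rewrite -DS /dstarts /= mem_heads in_set.
rewrite big_imset /=; last by move=> i j _ _; exact: inj.
apply: eq_bigr => i _; rewrite /xw.
case: pickP => [j /eqP /inj -> //|/(_ i)]; by rewrite eqxx.
Qed.

Lemma pmap_getl_inl (V : finType) (r : seq V) : pmap (@getl V) (map inl r) = r.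
Proof. by elim: r => //= a r ->. Qed.

Lemma linking_form (V : finType) n (E : rel V) (emb : 'I_n -> V)
   (I : {set 'I_n}) (S : {set V}) L :
  is_linking (Ex E) (fun i => inr (emb i)) I (inl @: S) L ->
  L = map (@liftp V) (map (pmap (@getl V)) L).
Proof.
move=> [AD _ DS DE]; rewrite -map_comp; apply/esym/map_id_in => p pL /=.
have := allP AD p pL; case: p pL => [|c r] // pL /andP[P _].
have : c \in dstarts L by rewrite inE; apply/hasP; exists (c :: r).
rewrite DS => /imsetP[i _ Hc]; subst c; set a := emb i in pL P *.
case: r pL P => [|u r] pL P.
  have : inr a \in dends L by rewrite inE; apply/hasP; exists [:: inr a].
  by rewrite DE => /imsetP[].
case: u pL P => [b|b] pL //= /andP[/eqP -> P].
rewrite (all_isl_map (path_inl_all P)) pmap_getl_inl /=.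
by [].
Qed.

Lemma noneg_Ex (R : realType) (V : finType) (E : rel V) (w : V -> V -> R) f :
  no_neg_cycle E w -> no_neg_cycle (Ex E) (wx w f).
Proof.
move=> H [a|a] s U C.
- have C' : path (Ex E) (inl a) (rcons s (inl a)) by [].
  have := path_inl_all C'; rewrite all_rcons => /andP[_ /all_isl_map Es].
  move: U C'; rewrite Es; set s0 := pmap _ s => U C'.
  rewrite -map_rcons -[inl a :: _]/(map inl (a :: rcons s0 a)) pweight_map_inl.
  apply: H.
    by move: U; rewrite -[inl a :: _]/(map inl (a :: s0)) (map_inj_uniq (@inl_inj V V)).
  by move: C'; rewrite -map_rcons path_map_inl.
- have C' : path (Ex E) (inr a) (rcons s (inr a)) by [].
  case: s {U C} C' => [|[b|b] s] //= /andP[_ P].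
  by have := path_inl_all P; rewrite all_rcons.
Qed.

Theorem proposition7p3 (R : realType) (n s : nat) (d : 'I_s -> nat)
    (mu : 'I_s -> {set 'I_n} -> \bar R) (x : 'I_n -> R) :
  valuated_flag_gammoid d mu ->
  valuated_flag_gammoid d (translate_flag mu x).
Proof.
move=> [V [E [w [emb [S [[inj nn] prop card link mlw]]]]]].
exists (V + V)%type, (Ex E), (wx w (xw emb x)), (fun i => inr (emb i)),
  (fun j => inl @: S j).
split.
- split; [by move=> i j [] /inj | exact: noneg_Ex].
- move=> j k jk; apply: imset_proper; last exact: prop.
  by move=> ? ? _ _; exact: inl_inj.
- by move=> j; rewrite card_imset //; exact: inl_inj.
- move=> j; have [I [L HL]] := link j; exists I, (map (@liftp V) L).
  exact/linking_lift.
- move=> j I cI; rewrite /translate_flag.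
  case: (mlw j I cI) => [[noL ->]|[L [HL -> minL]]].
  + left; split => // L' HL'.
    have Eq := linking_form HL'; rewrite Eq in HL'.
    exact: (noL _ (proj1 (linking_lift _ _ _ _ _) HL')).
  + right; exists (map (@liftp V) L); split.
    * exact/linking_lift.
    * by rewrite (lweight_lift w x inj HL) EFinD.
    * move=> L' HL'; have Eq := linking_form HL'; rewrite Eq in HL' *.
      move/linking_lift: HL' => HL'.
      rewrite (lweight_lift w x inj HL') EFinD lee_fin lerD2r -lee_fin.
      exact: minL.
Qed.
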